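(* Let $n\ge 2$, let $\mathcal{L}\subset\mathbb{R}^n$ be a tame lattice with Lagrangian basis $\{\mathbf{e}_1,\dots,\mathbf{e}_n\}$, $\mathbf{v}_1=\sum_i\mathbf{e}_i$, $a:=\langle\mathbf{e}_1,\mathbf{e}_1\rangle$, $h:=-\langle\mathbf{e}_1,\mathbf{e}_2\rangle$. Let $r,s$ be integers with $0\ne|r|<n$ and suppose $s=rh$. Then the dual lattice of $\mathcal{L}_{\mathbf{v}_1}^{(r,s)}$ equals $\frac{1}{r(a+h)}\mathcal{L}$.
   Context: Tame lattice: a full-rank lattice $\mathcal{L}\subset\mathbb{R}^n$ with a basis $\{\mathbf{e}_1,\dots,\mathbf{e}_n\}$ (Lagrangian basis) and nonzero $\mathbf{v}_1\in\mathcal{L}\cap\mathcal{L}^*$ such that $\sum_i\mathbf{e}_i=\mathbf{v}_1$, $\langle\mathbf{e}_i,\mathbf{v}_1\rangle=1$, $\langle\mathbf{e}_i,\mathbf{e}_i\rangle=a$, $\langle\mathbf{e}_i,\mathbf{e}_j\rangle=-h$ ($i\ne j$); then $a-h(n-1)=1$ and $a+h>0$. $\mathcal{L}^{(r,s)}_{\mathbf{v}_1}$ is the image of $\mathcal{L}$ under $\mathbf{x}\mapsto r\mathbf{x}+s\langle\mathbf{x},\mathbf{v}_1\rangle\mathbf{v}_1$. The dual of a lattice $\Lambda\subset\mathbb{R}^n$ is $\Lambda^*=\{\mathbf{v}:\langle\mathbf{v},\mathbf{x}\rangle\in\mathbb{Z}\ \forall\mathbf{x}\in\Lambda\}$. 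*)

(* Defs.v *)
From HB Require Import structures.
From mathcomp Require Import all_boot all_order all_algebra.
From mathcomp Require Import reals.
Set Implicit Arguments. Unset Strict Implicit. Unset Printing Implicit Defensive.
Import Order.TTheory GRing.Theory Num.Theory.
Local Open Scope ring_scope.

Section Lattices.
Variables (R : realType) (n : nat).

Definition dot (u v : 'rV[R]_n) : R := \sum_(i < n) u 0 i * v 0 i.

Definition lattice_of (e : 'I_n -> 'rV[R]_n) : 'rV[R]_n -> Prop :=
  fun x => exists z : 'I_n -> int, x = \sum_(i < n) ((z i)%:~R : R) *: e i.

Definition dual (L : 'rV[R]_n -> Prop) : 'rV[R]_n -> Prop :=
  fun v => forall x, L x -> exists k : int, dot v x = k%:~R.

Definition tame (e : 'I_n -> 'rV[R]_n) (v1 : 'rV[R]_n) (a h : R) : Prop :=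
  row_free (\matrix_(i < n) e i) /\
      v1 != 0 /\
      lattice_of e v1 /\ dual (lattice_of e) v1 /\
      \sum_(i < n) e i = v1 /\
      (forall i, dot (e i) v1 = 1) /\
      (forall i, dot (e i) (e i) = a) /\
      (forall i j, i != j -> dot (e i) (e j) = - h).

Definition rs_map (r s : R) (v1 x : 'rV[R]_n) : 'rV[R]_n :=
  r *: x + (s * dot x v1) *: v1.

Definition lattice_rs (L : 'rV[R]_n -> Prop) (r s : R) (v1 : 'rV[R]_n)
  : 'rV[R]_n -> Prop := fun y => exists x, L x /\ y = rs_map r s v1 x.

Definition scale_lattice (c : R) (L : 'rV[R]_n -> Prop) : 'rV[R]_n -> Prop :=
  fun y => exists x, L x /\ y = c *: x.

End Lattices.

(* Main.v *)
Require Import Defs.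
From HB Require Import structures.
From mathcomp Require Import all_boot all_order all_algebra.
From mathcomp Require Import reals.
From mathcomp Require Import ring lra.
Import Order.TTheory GRing.Theory Num.Theory.
Local Open Scope ring_scope.

Section Aux.
Variables (R : realType) (n : nat).
Implicit Types (u v w : 'rV[R]_n).

Lemma dotC u v : dot u v = dot v u.
Proof. by rewrite /dot; apply: eq_bigr => i _; rewrite mulrC. Qed.

Lemma dotDl u v w : dot (u + v) w = dot u w + dot v w.
Proof. by rewrite /dot -big_split; apply: eq_bigr => i _; rewrite mxE mulrDl. Qed.

Lemma dotZl c u w : dot (c *: u) w = c * dot u w.
Proof. by rewrite /dot mulr_sumr; apply: eq_bigr => i _; rewrite mxE mulrA. Qed.

Lemma dot0l w : dot 0 w = 0.
Proof. by rewrite /dot big1 // => i _; rewrite mxE mul0r. Qed.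

Lemma dot_suml (F : 'I_n -> 'rV[R]_n) w :
  dot (\sum_(k < n) F k) w = \sum_(k < n) dot (F k) w.
Proof.
exact: (big_morph (fun u => dot u w) (fun u v => dotDl u v w) (dot0l w)).
Qed.

Lemma dot_lin (z : 'I_n -> R) (e : 'I_n -> 'rV[R]_n) w :
  dot (\sum_(k < n) z k *: e k) w = \sum_(k < n) z k * dot (e k) w.
Proof. by rewrite dot_suml; apply: eq_bigr => k _; rewrite dotZl. Qed.

Lemma dot_lin_r (z : 'I_n -> R) (e : 'I_n -> 'rV[R]_n) w :
  dot w (\sum_(k < n) z k *: e k) = \sum_(k < n) z k * dot w (e k).
Proof. by rewrite dotC dot_lin; apply: eq_bigr => k _; rewrite dotC. Qed.

Lemma dot_self0 u : dot u u = 0 -> u = 0.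
Proof.
move=> H; apply/matrixP => i j; rewrite !mxE.
have /eqP := H; rewrite /dot psumr_eq0 => [/allP Hall|k _]; last first.
  by rewrite -expr2 sqr_ge0.
have := Hall j (mem_index_enum j); rewrite /= -expr2 sqrf_eq0 => /eqP.
by rewrite (ord1 i).
Qed.

Lemma dotNl u w : dot (- u) w = - dot u w.
Proof. by rewrite -scaleN1r dotZl mulN1r. Qed.
Lemma dotDr u v w : dot w (u + v) = dot w u + dot w v.
Proof. by rewrite dotC dotDl !(dotC w). Qed.
Lemma dotNr u w : dot w (- u) = - dot w u.
Proof. by rewrite dotC dotNl dotC. Qed.
End Aux.

Theorem mainTheorem9 (R : realType) (n : nat) (hn : (2 <= n)%N)
    (e : 'I_n -> 'rV[R]_n) (v1 : 'rV[R]_n) (a h : R)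
    (Htame : tame e v1 a h) (r s : int)
    (hr0 : r != 0) (hrn : (`|r| < n)%N) (hs : s%:~R = r%:~R * h) :
  forall y : 'rV[R]_n,
    dual (lattice_rs (lattice_of e) r%:~R s%:~R v1) y <->
    scale_lattice (r%:~R * (a + h))^-1 (lattice_of e) y.
Proof.
move=> y.
case: Htame => Hfree [_ [_ [_ [_ [Hv1 [Ha Hh]]]]]].
have Hee : forall i j, dot (e i) (e j) = (a + h) * (i == j)%:R - h.
  move=> i j; case: (eqVneq i j) => [->|ne].
    by rewrite Ha mulr1 addrK.
  by rewrite (Hh _ _ ne) mulr0 sub0r.
set M := \matrix_(i < n) e i.
have Hah : a + h != 0.
  apply/eqP => H0.
  have h0 : (0 < n)%N by apply: leq_trans hn.
  pose i0 := Ordinal h0; pose i1 := Ordinal hn.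
  have ne : i0 != i1 by [].
  have Hd : e i0 - e i1 = 0.
    apply: dot_self0.
    rewrite !(dotDl, dotDr, dotNl, dotNr) !Hee !eqxx (negbTE ne) eq_sym (negbTE ne).
    rewrite H0; lra.
  have : (('e_i0 - 'e_i1) : 'rV[R]_n) *m M = (0 : 'rV[R]_n) *m M.
    by rewrite mul0mx mulmxBl -!rowE !rowK.
  move/(row_free_inj Hfree)/matrixP/(_ 0 i0); rewrite !mxE eqxx /=.
  by move/eqP; rewrite subr0 oner_eq0.
set c := r%:~R * (a + h).
have Hc : c != 0 by rewrite mulf_neq0 // intr_eq0.
have Hphi : forall (z : 'I_n -> R) j,
    dot (e j) (rs_map r%:~R s%:~R v1 (\sum_(k < n) z k *: e k)) = c * z j.
  move=> z j.
  have Hxv : dot (\sum_(k < n) z k *: e k) v1 = \sum_(k < n) z k.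
    by rewrite dot_lin; apply: eq_bigr => k _; rewrite Hv1 mulr1.
  have Hex : dot (e j) (\sum_(k < n) z k *: e k) = (a + h) * z j - h * \sum_(k < n) z k.
    rewrite dot_lin_r.
    have -> : \sum_(k < n) z k * dot (e j) (e k)
      = \sum_(k < n) ((a + h) * (z k * (j == k)%:R)) - h * \sum_(k < n) z k.
      by rewrite mulr_sumr -sumrB; apply: eq_bigr => k _; rewrite Hee; ring.
    rewrite -mulr_sumr (bigD1 j) //= eqxx mulr1 big1 ?addr0 // => k /negbTE.
    by rewrite eq_sym => ->; rewrite mulr0.
  rewrite /rs_map dotC dotDl !dotZl dotC Hex Hxv dotC Hv1 hs /c; ring.
split.
- move=> Hy.
  have Hspan : y = \sum_(k < n) (y *m invmx M) 0 k *: e k.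
    rewrite -{1}(mulmxKV (_ : M \in unitmx) y); last by rewrite -row_free_unit.
    by rewrite mulmx_sum_row; apply: eq_bigr => k _; rewrite rowK.
  set t := fun k => (y *m invmx M) 0 k.
  have Hk : forall i, exists k : int, t i = c^-1 * k%:~R.
    move=> i.
    pose z := fun k : 'I_n => (if k == i then 1 else 0 : int).
    have [|k Hk] := Hy (rs_map r%:~R s%:~R v1 (\sum_(k < n) (z k)%:~R *: e k)).
      by exists (\sum_(k < n) (z k)%:~R *: e k); split => //; exists z.
    exists k; rewrite -Hk Hspan dot_lin.
    rewrite (bigD1 i) //= [\sum_(j < n | j != i) _]big1 ?addr0; last first.
      by move=> j /negbTE ji; rewrite Hphi /z ji mulr0z mulr0 mulr0.
    by rewrite Hphi /z eqxx mulr1z mulr1 mulrCA mulVf // mulr1.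
  have [kf Hkf] := fin_all_exists Hk.
  exists (\sum_(i < n) (kf i)%:~R *: e i); split; first by exists kf.
  rewrite {1}Hspan scaler_sumr; apply: eq_bigr => i _.
  by rewrite scalerA -Hkf.
- move=> [x [[w ->] ->]] x' [x0 [[z ->] ->]].
  exists (\sum_(k < n) w k * z k).
  rewrite dotZl dot_lin.
  under eq_bigr do rewrite Hphi.
  rewrite mulr_sumr rmorph_sum; apply: eq_bigr => k _.
  by rewrite /= intrM mulrCA mulKf.
Qed.
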